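(* If $(G,\tau)$ is a metrizable totally bounded Hausdorff topological group, then $(G,\mathcal{S}_\tau)$ is $mu$-bounded.
   Context: $\mathcal{S}_\tau$ is the smallest group ideal on $G$ containing every set $\{x\}\cup\{x_n:n\in\omega\}$ with $x_n\to x$ in $(G,\tau)$. A group ideal on $G$ is a family of subsets containing all finite subsets, closed under subsets and under $(A,B)\mapsto AB^{-1}$; it defines the coarse structure on $G$ with base $\{\{(x,y):x\in Ay\}:A\in\mathcal{I}\}$. For an entourage $E$, $E[x]=\{y:(x,y)\in E\}$. A function $f:(X,\mathcal{E})\to\mathbb{R}$ is macro-uniform if for every $E\in\mathcal{E}$, $\sup_{x\in X}\operatorname{diam} f(E[x])<\infty$. A coarse space is $mu$-bounded if every macro-uniform function on it is bounded. *)

(* Defs.v *)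
From Stdlib Require Import Reals List.
Open Scope R_scope.

Record Group := {
  carrier :> Type;
  gmul : carrier -> carrier -> carrier;
  ginv : carrier -> carrier;
  gone : carrier;
  gmul_assoc : forall x y z, gmul x (gmul y z) = gmul (gmul x y) z;
  gmul_one_l : forall x, gmul gone x = x;
  gmul_one_r : forall x, gmul x gone = x;
  gmul_inv_l : forall x, gmul (ginv x) x = gone;
  gmul_inv_r : forall x, gmul x (ginv x) = gone
}.

Definition subset {T : Type} (A B : T -> Prop) := forall x, A x -> B x.

Definition finite_set {T : Type} (A : T -> Prop) : Prop :=
  exists l : list T, forall x, A x -> In x l.

Definition is_topology {T : Type} (opens : (T -> Prop) -> Prop) : Prop :=
  opens (fun _ => True) /\
  (forall (F : (T -> Prop) -> Prop), (forall U, F U -> opens U) ->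
      opens (fun x => exists U, F U /\ U x)) /\
  (forall U V, opens U -> opens V -> opens (fun x => U x /\ V x)).

Definition topological_group (G : Group) (tau : (G -> Prop) -> Prop) : Prop :=
  is_topology tau /\
  (forall x y (W : G -> Prop), tau W -> W (gmul G x y) ->
     exists U V, tau U /\ tau V /\ U x /\ V y /\
       (forall u v, U u -> V v -> W (gmul G u v))) /\
  (forall x (W : G -> Prop), tau W -> W (ginv G x) ->
     exists U, tau U /\ U x /\ (forall u, U u -> W (ginv G u))).

Definition hausdorff {T : Type} (tau : (T -> Prop) -> Prop) : Prop :=
  forall x y, x <> y -> exists U V, tau U /\ tau V /\ U x /\ V y /\
    (forall z, U z -> V z -> False).

Definition is_metric {T : Type} (d : T -> T -> R) : Prop :=
  (forall x y, 0 <= d x y) /\ (forall x y, d x y = 0 <-> x = y) /\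
  (forall x y, d x y = d y x) /\ (forall x y z, d x z <= d x y + d y z).

Definition metrizable {T : Type} (tau : (T -> Prop) -> Prop) : Prop :=
  exists d : T -> T -> R, is_metric d /\
    forall U, tau U <-> (forall x, U x -> exists r, 0 < r /\
                           forall y, d x y < r -> U y).

Definition totally_bounded (G : Group) (tau : (G -> Prop) -> Prop) : Prop :=
  forall U : G -> Prop, tau U -> U (gone G) ->
    exists F : list G, forall g, exists f u, In f F /\ U u /\ g = gmul G f u.

Definition converges {T : Type} (tau : (T -> Prop) -> Prop) (s : nat -> T) (x : T) :=
  forall U, tau U -> U x -> exists N, forall n, (N <= n)%nat -> U (s n).

Definition set_mul_inv (G : Group) (A B : G -> Prop) : G -> Prop :=
  fun z => exists a b, A a /\ B b /\ z = gmul G a (ginv G b).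

Definition group_ideal (G : Group) (I : (G -> Prop) -> Prop) : Prop :=
  (forall A, finite_set A -> I A) /\
  (forall A B, I A -> subset B A -> I B) /\
  (forall A B, I A -> I B -> I (set_mul_inv G A B)).

Definition S_tau (G : Group) (tau : (G -> Prop) -> Prop) (A : G -> Prop) : Prop :=
  forall I, group_ideal G I ->
    (forall (s : nat -> G) (x : G), converges tau s x ->
        I (fun z => z = x \/ exists n, z = s n)) ->
    I A.

(** Coarse structure of a group ideal: subsets of basic entourages
    {(x,y) : x \in A y}, A in I. *)
Definition ideal_entourage (G : Group) (I : (G -> Prop) -> Prop)
    (E : G -> G -> Prop) : Prop :=
  exists A, I A /\ forall x y, E x y -> exists a, A a /\ x = gmul G a y.

Definition macro_uniform {X : Type} (ent : (X -> X -> Prop) -> Prop)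
    (f : X -> R) : Prop :=
  forall E, ent E -> exists C : R, forall x y z, E x y -> E x z ->
    Rabs (f y - f z) <= C.

Definition mu_bounded {X : Type} (ent : (X -> X -> Prop) -> Prop) : Prop :=
  forall f : X -> R, macro_uniform ent f -> exists C : R, forall x, Rabs (f x) <= C.

(* Main.v *)
Require Import Defs.
From Stdlib Require Import Reals List Lra Classical ClassicalEpsilon.
Open Scope R_scope.

Lemma inv_unique (G : Group) (a b : G) : gmul G a b = gone G -> b = ginv G a.
Proof.
  intro H. rewrite <- (gmul_one_l G b), <- (gmul_inv_l G a), <- gmul_assoc, H.
  apply gmul_one_r.
Qed.

Lemma inv_one (G : Group) : ginv G (gone G) = gone G.
Proof. symmetry; apply inv_unique, gmul_one_l. Qed.

Lemma inv_inv (G : Group) (a : G) : ginv G (ginv G a) = a.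
Proof. symmetry; apply inv_unique, gmul_inv_l. Qed.

Lemma inv_mul (G : Group) (a b : G) :
  ginv G (gmul G a b) = gmul G (ginv G b) (ginv G a).
Proof.
  symmetry; apply inv_unique.
  rewrite <- gmul_assoc, (gmul_assoc G b), gmul_inv_r, gmul_one_l, gmul_inv_r.
  reflexivity.
Qed.

Lemma ball_open {T : Type} (tau : (T -> Prop) -> Prop) (d : T -> T -> R) :
  is_metric d ->
  (forall U, tau U <-> (forall x, U x -> exists r, 0 < r /\ forall y, d x y < r -> U y)) ->
  forall e r, tau (fun z => d e z < r).
Proof.
  intros [H0 [H1 [H2 H3]]] Ht e r. apply Ht. intros x Hx.
  exists (r - d e x). split; [lra|]. intros y Hy.
  pose proof (H3 e x y). lra.
Qed.

Lemma cells (G : Group) (tau : (G -> Prop) -> Prop) (d : G -> G -> R) :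
  topological_group G tau -> is_metric d ->
  (forall U, tau U <-> (forall x, U x -> exists r, 0 < r /\ forall y, d x y < r -> U y)) ->
  totally_bounded G tau ->
  forall r, 0 < r -> exists (F : list G) (P : G -> G -> Prop),
    (forall g, exists c, In c F /\ P c g) /\
    (forall c x y, P c x -> P c y -> d (gone G) (gmul G y (ginv G x)) < r).
Proof.
  intros [Htop [Hmul Hinv]] Hm Ht Htb r Hr.
  pose proof (ball_open tau d Hm Ht (gone G) r) as HB.
  assert (Hee : d (gone G) (gmul G (gone G) (gone G)) < r).
  { rewrite gmul_one_l. destruct Hm as [_ [H1 _]]. rewrite (proj2 (H1 _ _) eq_refl). lra. }
  destruct (Hmul _ _ _ HB Hee) as [U [V [HU [HV [HUe [HVe HUV]]]]]].
  assert (HUi : U (ginv G (gone G))) by (rewrite inv_one; exact HUe).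
  destruct (Hinv _ _ HU HUi) as [U' [HU' [HU'e HU'i]]].
  set (W := fun x => U' x /\ V x).
  assert (HW : tau W) by (apply (proj2 (proj2 Htop)); assumption).
  destruct (Htb W HW (conj HU'e HVe)) as [F HF].
  exists F, (fun c g => exists u, W u /\ ginv G g = gmul G c u).
  split.
  - intro g. destruct (HF (ginv G g)) as [c [u [Hc [Hu Heq]]]].
    exists c. split; [exact Hc|]. exists u. split; assumption.
  - intros c x y [u [Hu Hx]] [u' [Hu' Hy]].
    rewrite <- (inv_inv G y), Hy, Hx, inv_mul.
    rewrite gmul_assoc, <- (gmul_assoc G (ginv G u')), gmul_inv_l, gmul_one_r.
    apply HUV; [apply HU'i; apply Hu' | apply Hu].
Qed.

Section Unb.
Variable (G : Group) (f : G -> R).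
Definition Unb (D : G -> Prop) := forall M, exists g, D g /\ M < Rabs (f g).

Lemma split_unb (P : G -> G -> Prop) (l : list G) : forall D,
  Unb D -> (forall g, D g -> exists c, In c l /\ P c g) ->
  exists c, Unb (fun g => D g /\ P c g).
Proof.
  induction l as [|a l IH]; intros D HD Hc.
  - destruct (HD 0) as [g [Hg _]]. destruct (Hc g Hg) as [c [[] _]].
  - destruct (classic (Unb (fun g => D g /\ P a g))) as [H|H].
    + exists a. exact H.
    + assert (HM : exists M, forall g, D g -> P a g -> Rabs (f g) <= M).
      { apply NNPP; intro HN. apply H. intro M.
        apply NNPP; intro HN2. apply HN. exists M. intros g Hg Hp.
        apply Rnot_lt_le. intro Hlt. apply HN2. exists g. auto. }
      destruct HM as [M HM].
      destruct (IH (fun g => D g /\ ~ P a g)) as [c Hc'].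
      * intro M'. destruct (HD (Rmax M M')) as [g [Hg Hgt]].
        exists g. split; [split; [exact Hg|] |].
        -- intro Hp. pose proof (HM g Hg Hp). pose proof (Rmax_l M M'). lra.
        -- pose proof (Rmax_r M M'). lra.
      * intros g [Hg Hnp]. destruct (Hc g Hg) as [c [[<-|Hin] Hp]].
        -- contradiction.
        -- exists c; auto.
      * exists c. intro M'. destruct (Hc' M') as [g [[[Hg _] Hp] Hgt]].
        exists g. auto.
Qed.
End Unb.

Theorem theorem10 (G : Group) (tau : (G -> Prop) -> Prop) :
  topological_group G tau -> metrizable tau -> totally_bounded G tau ->
  hausdorff tau ->
  mu_bounded (ideal_entourage G (S_tau G tau)).
Proof.
  intros Htg [d [Hm Ht]] Htb _ f Hf.
  apply NNPP; intro Hnb.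
  assert (HU : Unb G f (fun _ => True)).
  { intro M. apply NNPP; intro HN. apply Hnb. exists M. intro x.
    apply Rnot_lt_le. intro Hlt. apply HN. exists x. auto. }
  set (e := gone G).
  set (Good := fun (k : nat) (p : (G -> Prop) * G) =>
    Unb G f (fst p) /\ fst p (snd p) /\
    forall x y, fst p x -> fst p y -> d e (gmul G y (ginv G x)) < / (INR k + 1)).
  assert (Hcells : forall k : nat, exists (F : list G) (P : G -> G -> Prop),
    (forall g, exists c, In c F /\ P c g) /\
    (forall c x y, P c x -> P c y -> d e (gmul G y (ginv G x)) < / (INR k + 1))).
  { intro k. apply (cells G tau d Htg Hm Ht Htb). apply Rinv_0_lt_compat.
    pose proof (pos_INR k). lra. }
  assert (Hstep : forall k p, Good k p -> exists p', Good (S k) p' /\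
     (forall x, fst p' x -> fst p x) /\
     Rabs (f (snd p)) + INR k + 1 < Rabs (f (snd p'))).
  { intros k p [Hu [Hg Hc]].
    destruct (Hcells (S k)) as [F [P [HF HP]]].
    destruct (split_unb G f P F (fst p) Hu (fun g _ => HF g)) as [c Hc'].
    destruct (Hc' (Rabs (f (snd p)) + INR k + 1)) as [g' [Hg' Hlt]].
    exists (fun g => fst p g /\ P c g, g'). simpl. split; [|split].
    - split; [exact Hc'|]. split; [exact Hg'|]. simpl.
      intros x y [_ Hx] [_ Hy]. apply (HP c x y Hx Hy).
    - intros x [Hx _]; exact Hx.
    - exact Hlt. }
  assert (Hinit : exists p, Good 0%nat p).
  { destruct (Hcells 0%nat) as [F [P [HF HP]]].
    destruct (split_unb G f P F (fun _ => True) HU (fun g _ => HF g)) as [c Hc'].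
    destruct (Hc' 0) as [g' [Hg' _]].
    exists (fun g => True /\ P c g, g'). split; [exact Hc'|]. split; [exact Hg'|].
    simpl. intros x y [_ Hx] [_ Hy]. apply (HP c x y Hx Hy). }
  set (dflt := (fun _ : G => True, e)).
  set (p0 := epsilon (inhabits dflt) (Good 0%nat)).
  set (step := fun k p => epsilon (inhabits dflt) (fun p' => Good (S k) p' /\
     (forall x, fst p' x -> fst p x) /\
     Rabs (f (snd p)) + INR k + 1 < Rabs (f (snd p')))).
  set (sq := fix sq (n : nat) := match n with O => p0 | S k => step k (sq k) end).
  assert (Hsq : forall n, Good n (sq n) /\
     (forall x, fst (sq (S n)) x -> fst (sq n) x) /\
     Rabs (f (snd (sq n))) + INR n + 1 < Rabs (f (snd (sq (S n))))).
  { assert (HG : forall n, Good n (sq n)).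
    { induction n as [|n IH].
      - simpl. apply (epsilon_spec (inhabits dflt) (Good 0%nat) Hinit).
      - simpl. apply (epsilon_spec (inhabits dflt) _ (Hstep n _ IH)). }
    intro n. split; [apply HG|].
    apply (epsilon_spec (inhabits dflt) _ (Hstep n _ (HG n))). }
  set (g := fun n => snd (sq n)).
  set (z := fun n => gmul G (g (S n)) (ginv G (g n))).
  assert (Hz : forall n, d e (z n) < / (INR n + 1)).
  { intro n. destruct (Hsq n) as [[_ [Hg Hc]] [Hsub _]].
    destruct (Hsq (S n)) as [[_ [Hg' _]] _].
    apply Hc; [exact Hg | apply Hsub; exact Hg']. }
  assert (Hconv : converges tau z e).
  { intros U HUo HUe. destruct (proj1 (Ht U) HUo e HUe) as [r [Hr Hball]].
    destruct (archimed (/ r)) as [Har _].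
    destruct (INR_unbounded (/ r)) as [N HN].
    exists N. intros n Hn. apply Hball.
    apply Rlt_trans with (/ (INR n + 1)); [apply Hz|].
    apply le_INR in Hn.
    apply Rle_lt_trans with (/ (INR N + 1)).
    - apply Rinv_le_contravar; [pose proof (pos_INR N)|]; lra.
    - rewrite <- (Rinv_inv r). apply Rinv_lt_contravar.
      + pose proof (pos_INR N). apply Rmult_lt_0_compat; [apply Rinv_0_lt_compat|]; lra.
      + lra. }
  set (A := fun w => w = e \/ exists n, w = z n).
  set (E := fun x y => exists a, A a /\ x = gmul G a y).
  assert (HE : ideal_entourage G (S_tau G tau) E).
  { exists A. split.
    - intros I _ HI. apply (HI z e Hconv).
    - intros x y H; exact H. }
  destruct (Hf E HE) as [C HC].
  destruct (INR_unbounded C) as [n Hn].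
  assert (H1 : Rabs (f (g n) - f (g (S n))) <= C).
  { apply (HC (g (S n))).
    - exists (z n). split; [right; exists n; reflexivity|]. unfold z.
      rewrite <- gmul_assoc, gmul_inv_l, gmul_one_r. reflexivity.
    - exists e. split; [left; reflexivity|]. unfold e. rewrite gmul_one_l. reflexivity. }
  destruct (Hsq n) as [_ [_ Hlt]].
  pose proof (Rabs_triang_inv (f (g (S n))) (f (g n))).
  rewrite Rabs_minus_sym in H1. unfold g in *. lra.
Qed.
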